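(* Let $M$ be a $3$-connected simple matroid with a $3$-connected simple minor $N$, and suppose $r(M)\ge 4$. If $X$ is the hull of an $N$-carambole of $M$, then $X$ is an independent set of $M$ and every element of $X$ is $N$-contractible in $M$.
   Context: An element $x$ is $N$-contractible in $M$ if $M/x$ is a $3$-connected matroid with an $N$-minor; a set $Y$ is vertically $N$-contractible if $\mathrm{si}(M/Y)$ (the simplification) is a $3$-connected matroid with an $N$-minor. A line is a rank-$2$ set. For $n\ge3$, a sequence $x_1,\dots,x_n,y_1,\dots,y_n$ of elements of $M$ is an $N$-carambole of $M$ if $L:=\{y_1,\dots,y_n\}$ is a vertically $N$-contractible line of $M$ with $n$ distinct elements and, for each $i$, $(L-y_i)\cup x_i$ is a cocircuit of $M$; $X:=\{x_1,\dots,x_n\}$ is its hull. *)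

(* Defs.v *)
From mathcomp Require Import all_boot.
Set Implicit Arguments. Unset Strict Implicit. Unset Printing Implicit Defensive.

(* Minors of a matroid on T are again pre-matroids on T (with smaller ground set). *)
Record pmat (T : finType) := PMat { gr : {set T}; rk : {set T} -> nat }.

Section Matroids.
Variable T : finType.
Implicit Types (M : pmat T) (X Y C D : {set T}).

(* rank axioms (R1)-(R3); the rank of a set only depends on its part in E *)
Definition is_matroid M : Prop :=
  [/\ forall X, rk M X = rk M (X :&: gr M),
      forall X, rk M X <= #|X|,
      forall X Y, X \subset Y -> rk M X <= rk M Y
    & forall X Y, rk M (X :|: Y) + rk M (X :&: Y) <= rk M X + rk M Y].

Definition indep M X : Prop := X \subset gr M /\ rk M X = #|X|.

Definition delete M D : pmat T :=
  PMat (gr M :\: D) (fun X => rk M (X :&: (gr M :\: D))).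

Definition contract M C : pmat T :=
  PMat (gr M :\: C)
       (fun X => rk M ((X :&: (gr M :\: C)) :|: (C :&: gr M)) - rk M (C :&: gr M)).

Definition dual M : pmat T :=
  PMat (gr M)
       (fun X => #|X :&: gr M| + rk M (gr M :\: X) - rk M (gr M)).

Definition circuit M C : Prop :=
  [/\ C \subset gr M, rk M C < #|C|
    & forall D, D \proper C -> rk M D = #|D|].

Definition cocircuit M C : Prop := circuit (dual M) C.

(* simple: no loops and no parallel pairs *)
Definition simple M : Prop :=
  forall e f, e \in gr M -> f \in gr M -> rk M [set e; f] = #|[set e; f]|.

Definition lambda M X : nat :=
  rk M (X :&: gr M) + rk M (gr M :\: X) - rk M (gr M).

Definition separation M (k : nat) X : Prop :=
  [/\ X \subset gr M, k <= #|X|, k <= #|gr M :\: X| & lambda M X < k].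

Definition three_connected M : Prop :=
  forall k X, 0 < k < 3 -> ~ separation M k X.

(* canonical simplification: delete loops, and in each parallel class keep
   only the element of least [enum_rank]. *)
Definition si_keep M : {set T} :=
  [set e in gr M | (rk M [set e] == 1) &&
     [forall f, ((f \in gr M) && (rk M [set e; f] == 1)) ==>
                (enum_rank e <= enum_rank f)]].

Definition si M : pmat T := delete M (gr M :\: si_keep M).

End Matroids.

Definition isomorphic (T T' : finType) (N : pmat T') (M' : pmat T) : Prop :=
  exists f : T' -> T,
    [/\ {in gr N &, injective f}, f @: gr N = gr M'
      & forall X : {set T'}, X \subset gr N -> rk N X = rk M' (f @: X)].

Definition has_minor (T T' : finType) (M : pmat T) (N : pmat T') : Prop :=
  exists C D : {set T},
    [/\ C \subset gr M, D \subset gr M, [disjoint C & D]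
      & isomorphic N (delete (contract M C) D)].

Definition N_contractible (T T' : finType) (M : pmat T) (N : pmat T') (x : T) : Prop :=
  three_connected (contract M [set x]) /\ has_minor (contract M [set x]) N.

Definition vert_N_contractible (T T' : finType) (M : pmat T) (N : pmat T')
    (Y : {set T}) : Prop :=
  three_connected (si (contract M Y)) /\ has_minor (si (contract M Y)) N.

Definition carambole (T T' : finType) (M : pmat T) (N : pmat T') (n : nat)
    (x y : 'I_n -> T) : Prop :=
  let L := [set y i | i : 'I_n] in
  [/\ 3 <= n,
      (forall i, x i \in gr M /\ y i \in gr M) /\ injective y,
      rk M L = 2,
      vert_N_contractible M N L
    & forall i, cocircuit M ((L :\ y i) :|: [set x i])].

Definition hull (T : finType) (n : nat) (x : 'I_n -> T) : {set T} :=
  [set x i | i : 'I_n].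

(* Main.v *)
Require Import Defs.
From mathcomp Require Import all_boot zify.
Set Implicit Arguments. Unset Strict Implicit. Unset Printing Implicit Defensive.
Section Basic.
Variables (T : finType) (M : pmat T).
Hypothesis hM : is_matroid M.
Implicit Types (X Y W S H : {set T}).
Local Notation r := (rk M).
Local Notation E := (gr M).

Lemma rI X : r X = r (X :&: E). Proof. by case: hM. Qed.
Lemma rle X : r X <= #|X|. Proof. by case: hM. Qed.
Lemma rmono X Y : X \subset Y -> r X <= r Y. Proof. by case: hM => _ _ H _; apply: H. Qed.
Lemma rsub X Y : r (X :|: Y) + r (X :&: Y) <= r X + r Y. Proof. by case: hM. Qed.
Lemma rsubW X Y W : W \subset X :&: Y -> r (X :|: Y) + r W <= r X + r Y.
Proof. move=> h; apply: leq_trans (rsub X Y); rewrite leq_add2l; exact: rmono. Qed.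
Lemma radd1 X e : r (e |: X) <= r X + 1.
Proof.
have := rsub [set e] X. have := rle [set e]; rewrite cards1 => h1 h2.
have : r (e |: X) <= r (e |: X) + r ([set e] :&: X) by rewrite leq_addr.
move=> h3; apply: leq_trans h3 _; apply: leq_trans h2 _; rewrite addnC leq_add2l //.
Qed.
Lemma clmono S H e : S \subset H -> r H < r (e |: H) -> r S < r (e |: S).
Proof.
move=> sSH lt.
have h := rsubW (X := e |: S) (Y := H) (W := S).
have : S \subset (e |: S) :&: H by rewrite subsetI subsetU1 sSH.
move/h => {h} h.
have e1 : (e |: S) :|: H = e |: H.
  apply/setP => z; rewrite !inE; case: (z == e) => //=.
  case zS: (z \in S) => //=; by rewrite (subsetP sSH _ zS).
rewrite e1 in h. rewrite ltnNge; apply/negP => h2.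
have : r (e |: H) + r S <= r S + r H by apply: leq_trans h _; rewrite leq_add2r.
rewrite addnC leq_add2l leqNgt lt //.
Qed.
Lemma card2 (X : {set T}) a b : a != b -> a \in X -> b \in X -> 2 <= #|X|.
Proof.
move=> ab aX bX; have <- : #|[set a; b]| = 2 by rewrite cards2 ab.
apply: subset_leq_card.
by apply/subsetP => z; rewrite !inE => /orP [] /eqP ->.
Qed.
Lemma compl (U S : {set T}) : S \subset U -> U :\: (U :\: S) = S.
Proof.
move=> sS; apply/setP => z; rewrite !inE; case zS: (z \in S) => /=.
  by rewrite (subsetP sS).
by case: (z \in U).
Qed.
End Basic.
Section Car.
Variables (T : finType) (M : pmat T) (n : nat) (x y : 'I_n -> T).
Local Notation r := (rk M).
Local Notation E := (gr M).
Local Notation L := [set y i | i : 'I_n].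
Local Notation A := (E :\: L).
Local Notation C i := ((L :\ y i) :|: [set x i]).
Local Notation H i := (E :\: C i).
Hypotheses (hM : is_matroid M) (h3 : three_connected M) (hs : simple M)
  (hr4 : 4 <= r E) (hn : 3 <= n) (hxE : forall i, x i \in E) (hyE : forall i, y i \in E)
  (hyi : injective y) (hL2 : r L = 2) (hcoc : forall i, cocircuit M (C i)).
Implicit Types (X Y W S Z : {set T}).

Lemma yL i : y i \in L. Proof. exact: imset_f. Qed.
Lemma LE : L \subset E. Proof. by apply/subsetP => z /imsetP [i _ ->]. Qed.
Lemma cardL : #|L| = n. Proof. by rewrite card_imset // card_ord. Qed.
Lemma r1 e : e \in E -> r [set e] = 1.
Proof. move=> eE; have := hs eE eE. by rewrite setUid cards1. Qed.
Lemma r2 e f : e \in E -> f \in E -> e != f -> r [set e; f] = 2.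
Proof. move=> eE fE ef; by rewrite (hs eE fE) cards2 ef. Qed.

Lemma conn2 X Y : X \subset E -> E :\: X \subset Y -> 2 <= #|X| -> 2 <= #|E :\: X| ->
  r E + 2 <= r X + r Y.
Proof.
move=> sXE sY c1 c2.
have ns : ~ separation M 2 X by apply: h3.
have : ~~ (lambda M X < 2) by apply/negP => hl; apply: ns; split.
rewrite /lambda -(rI hM) -leqNgt => hl.
have := rmono hM sY. lia.
Qed.

Lemma coc_facts i : [/\ C i \subset E, r (H i) < r E &
  forall e, e \in C i -> r (e |: H i) = r E].
Proof.
have := hcoc i; rewrite /cocircuit /circuit /= => -[sC lt hD].
have CI : C i :&: E = C i by apply/setIidPl.
rewrite CI in lt.
have cC : 2 <= #|C i|.
  apply: leq_trans (subset_leq_card (subsetUl _ _)).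
  have := cardsD1 (y i) L; rewrite yL cardL /=; lia.
split => //; first lia.
move=> e eC.
have := hD (C i :\ e) (properD1 eC).
rewrite /= (setIidPl (subset_trans (subsetDl _ _) sC)).
have := cardsD1 e (C i); rewrite eC => hc h.
have h1 : r E <= r (E :\: (C i :\ e)) by lia.
have s1 : E :\: (C i :\ e) \subset e |: H i.
  apply/subsetP => z; rewrite !inE.
  by case: (z == e).
have s2 : e |: H i \subset E.
  by rewrite subUset sub1set (subsetP sC _ eC) subsetDl.
have := rmono hM s1; have := rmono hM s2. lia.
Qed.
Lemma cardC i : 2 <= #|C i|.
Proof.
apply: leq_trans (subset_leq_card (subsetUl _ _)).
have := cardsD1 (y i) L; rewrite yL cardL /=; lia.
Qed.

Lemma clm i S e : S \subset H i -> e \in C i -> r S < r (e |: S).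
Proof.
move=> sS eC; case: (coc_facts i) => _ lt he.
apply: (clmono hM sS); by rewrite he.
Qed.

Lemma xC i : x i \in C i. Proof. by rewrite !inE eqxx orbT. Qed.
Lemma yC j k : k != j -> y k \in C j.
Proof. move=> kj; rewrite !inE yL andbT (inj_eq hyi) kj //. Qed.

Lemma rHlow i : r E <= r (H i) + 1.
Proof.
case: (coc_facts i) => _ _ he; rewrite -(he _ (xC i)); exact: radd1.
Qed.

Lemma xnotL i : x i \notin L.
Proof.
apply/negP => xL.
case: (coc_facts i) => sC lt _.
have sCL : C i \subset L by rewrite subUset subD1set sub1set xL.
have := conn2 sC (subxx _) (cardC i).
have := rle hM (H i); have := rHlow i; have := rmono hM sCL.
move=> a b c d. have : 2 <= #|H i| by lia.
move/d; lia.
Qed.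

Lemma xA i : x i \in A. Proof. by rewrite inE xnotL hxE. Qed.

Lemma rA : r A = r E.
Proof.
have n1 : 2 <= #|A|.
  have h1 := rsub hM L A.
  have : E \subset L :|: A.
    apply/subsetP => z zE; rewrite !inE zE; by case: (z \in L).
  move/(rmono hM) => h2. have := rle hM A. lia.
have := conn2 LE (subxx _) _ n1. rewrite cardL => /(_ (ltnW hn)).
have : A \subset E by apply: subsetDl.
move/(rmono hM). lia.
Qed.

Lemma HA i : A :\ x i \subset H i.
Proof.
apply/subsetP => z; rewrite !inE; case/and3P => zx zL zE.
by rewrite zE (negbTE zL) (negbTE zx) andbF.
Qed.

Lemma Hm j z : z \in A -> z != x j -> z \in H j.
Proof. move=> zA zx; apply: (subsetP (HA j)); by rewrite in_setD1 zx zA. Qed.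

Lemma yH j : y j \in H j.
Proof.
have ne : y j != x j by apply/eqP => e; have := xnotL j; rewrite -e yL.
by rewrite !inE hyE eqxx (negbTE ne).
Qed.

Lemma rAx i : r (A :\ x i) = r E - 1.
Proof.
case: (coc_facts i) => _ lt _.
have := rmono hM (HA i).
have := radd1 hM (A :\ x i) (x i); rewrite setD1K ?xA // rA. lia.
Qed.

Lemma coloop i Y : Y \subset A :\ x i -> r Y < r (x i |: Y).
Proof.
move=> sY; apply: (clmono hM sY). rewrite setD1K ?xA // rA rAx. lia.
Qed.

Lemma xinj i j : i != j -> x i != x j.
Proof.
move=> ij; apply/negP => /eqP e.
have s1 : y i |: (A :\ x i) \subset H i by rewrite subUset sub1set yH HA.
have := clm (HA j) (yC (j := j) ij).
rewrite -e rAx. have := rmono hM s1. have := rHlow i.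
case: (coc_facts i) => _ lt _. lia.
Qed.

Lemma indep_hull : indep M (hull x).
Proof.
have sXA : hull x \subset A.
  by apply/subsetP => z /imsetP [i _ ->]; rewrite xA.
split; first by apply: subset_trans sXA (subsetDl _ _).
apply/eqP; rewrite eqn_leq rle //=.
suff : forall k Y, #|Y| = k -> Y \subset hull x -> #|Y| <= r Y by apply.
elim => [|k IH] Y cY sY; first by rewrite cY.
have : 0 < #|Y| by rewrite cY.
case/card_gt0P => e eY.
have := subsetP sY _ eY; case/imsetP => i _ ei.
have cY' : #|Y :\ e| = k by have := cardsD1 e Y; rewrite eY cY; lia.
have := IH _ cY' (subset_trans (subsetDl _ _) sY).
have : Y :\ e \subset A :\ x i.
  apply/subsetP => z; rewrite !inE -ei => /andP [-> zY].
  by have := subsetP sXA _ (subsetP sY _ zY); rewrite inE => ->.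
move/coloop; rewrite -ei setD1K //. lia.
Qed.

Lemma two_others (i : 'I_n) : exists j1 j2 : 'I_n, [/\ j1 != i, j2 != i & j1 != j2].
Proof.
have h0 : 0 < n by lia. have h1 : 1 < n by lia. have h2 : 2 < n by lia.
set a := Ordinal h0; set b := Ordinal h1; set c := Ordinal h2.
have ab : a != b by []. have ac : a != c by []. have bc : b != c by [].
case: (eqVneq i a) => [->|ia]; first by exists b, c.
case: (eqVneq i b) => [->|ib]; first by exists a, c.
by exists a, b; rewrite !(eq_sym _ i).
Qed.

Lemma key i S : S \subset E :\ x i ->
  r (x i |: S) <= r S -> r (x i |: ((E :\ x i) :\: S)) <= r ((E :\ x i) :\: S) ->
  r S + r ((E :\ x i) :\: S) <= r E + 2 -> 2 <= #|S :&: L| -> False.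
Proof.
set xx := x i; set S' := (E :\ xx) :\: S => sS h1 h2 hh3 hSL.
set Z := S' :\: L.
have ZA : Z \subset A :\ xx.
  apply/subsetP => z; rewrite !inE; case/andP => -> /andP [_ /andP [-> ->]] //.
have rSL : r (S :|: L) <= r S.
  case/card_gt1P: hSL => e [f [eS fS ef]].
  have := rsub hM S L.
  have : [set e; f] \subset S :&: L by rewrite subUset !sub1set eS fS.
  move/(rmono hM).
  have eE : e \in E by move: eS; rewrite inE => /andP [/(subsetP sS)]; rewrite inE => /andP [].
  have fE : f \in E by move: fS; rewrite inE => /andP [/(subsetP sS)]; rewrite inE => /andP [].
  rewrite r2 //. lia.
have rSLx : r (xx |: (S :|: L)) <= r S.
  have := rsubW hM (X := xx |: S) (Y := S :|: L) (W := S).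
  rewrite subsetI subsetUl subsetU1 => /(_ isT).
  have : xx |: (S :|: L) \subset (xx |: S) :|: (S :|: L).
    apply/subsetP => z; rewrite !inE; by case: (z == xx); case: (z \in S).
  move/(rmono hM). lia.
have cAx : r E - 1 <= #|A :\ xx| by rewrite -(rAx i) rle.
have [c0|[c1|c2]] : #|Z| = 0 \/ #|Z| = 1 \/ 2 <= #|Z| by lia.
-
  have sSL : S' \subset L.
    apply/subsetP => z zS; apply/negPn/negP => zL.
    have : z \in Z by rewrite inE zL.
    by move/cards0_eq: c0 => ->; rewrite inE.
  have := rsubW hM (X := L) (Y := xx |: S') (W := S').
  rewrite subsetI sSL subsetU1 => /(_ isT).
  have : xx |: L \subset L :|: (xx |: S').
    apply/subsetP => z; rewrite !inE; by case: (z == xx); case: (z \in L).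
  move/(rmono hM).
  have s1 : xx |: L \subset E by rewrite subUset sub1set hxE LE.
  have s2 : E :\: (xx |: L) \subset A :\ xx.
    apply/subsetP => z; rewrite !inE; by case: (z == xx); case: (z \in L).
  have c3 : 2 <= #|xx |: L|.
    apply: leq_trans (subset_leq_card (subsetUr _ _)); rewrite cardL; move: hn; clear; lia.
  have c4 : 2 <= #|E :\: (xx |: L)|.
    apply: leq_trans (subset_leq_card (_ : A :\ xx \subset _)).
      move: cAx hr4; clear; lia.
    apply/subsetP => z; rewrite !inE; by case: (z == xx); case: (z \in L).
  have := conn2 s1 s2 c3 c4. rewrite rAx => a b c; move: a b c h2 hL2 hr4; clear; lia.
-
  move/eqP: c1 => /cards1P [z Zz].
  have zZ : z \in Z by rewrite Zz inE.
  have zAx := subsetP ZA _ zZ.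
  have zA : z \in A by move: zAx; rewrite in_setD1 => /andP [_ ->].
  have zx : z != xx by move: zAx; rewrite in_setD1 => /andP [-> _].
  have zE : z \in E by move: zA; rewrite in_setD => /andP [_ ->].
  have sSL : S' \subset z |: L.
    apply/subsetP => w wS; rewrite inE; case wL: (w \in L); rewrite ?orbT //.
    have : w \in Z by rewrite inE wL.
    by rewrite Zz inE => ->.
  have r3 : r (xx |: (z |: L)) <= 3.
    have := rsubW hM (X := z |: L) (Y := xx |: S') (W := S').
    rewrite subsetI sSL subsetU1 => /(_ isT).
    have : xx |: (z |: L) \subset (z |: L) :|: (xx |: S').
      apply/subsetP => w; rewrite !inE; by case: (w == xx); case: (w == z); case: (w \in L).
    move/(rmono hM). have := radd1 hM L z => a b c; move: a b c h2 hL2; clear; lia.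
  have rAz : r E - 2 <= r (A :\ xx :\ z).
    have := radd1 hM (A :\ xx :\ z) z; rewrite setD1K // rAx => a; move: a; clear; lia.
  have s1 : xx |: (z |: L) \subset E by rewrite !subUset !sub1set hxE zE LE.
  have s2 : E :\: (xx |: (z |: L)) \subset A :\ xx :\ z.
    apply/subsetP => w; rewrite !inE; by case: (w == xx); case: (w == z); case: (w \in L).
  have c3 : 2 <= #|xx |: (z |: L)|.
    apply: leq_trans (subset_leq_card (_ : L \subset _)); first by rewrite cardL; move: hn; clear; lia.
    by apply/subsetP => w wL; rewrite !inE wL !orbT.
  have c4 : 2 <= #|E :\: (xx |: (z |: L))|.
    apply: leq_trans (subset_leq_card (_ : A :\ xx :\ z \subset _)).
      have := rle hM (A :\ xx :\ z) => a; move: a rAz hr4; clear; lia.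
    apply/subsetP => w; rewrite !inE; by case: (w == xx); case: (w == z); case: (w \in L).
  have cc := conn2 s1 s2 c3 c4.
  have : A :\ xx :\ z \subset A :\ xx by apply: subsetDl.
  move/(rmono hM); rewrite rAx => rAz2.
  have ge3 : 3 <= r (xx |: (z |: L)) by move: cc rAz2 hr4; clear; lia.
  have zxj : forall j, j != i -> z != x j.
    move=> j ji; apply/negP => /eqP ezj.
    have : A :\ xx :\ z \subset A :\ x j by rewrite ezj setSD // subsetDl.
    move/coloop. rewrite ezj setD1K; last by rewrite in_setD1 xA andbT xinj.
    rewrite -ezj rAx => a; move: a cc r3; clear; lia.
  have rT : forall j, j != i -> r [set y j; z; xx] <= 2.
    move=> j ji.
    have sT : [set y j; z; xx] \subset H j.
      rewrite !subUset !sub1set yH Hm ?xA ?zxj //= Hm ?xA //; apply: xinj; by rewrite eq_sym.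
    have ij : i != j by rewrite eq_sym. have := clm sT (yC ij).
    have : y i |: [set y j; z; xx] \subset xx |: (z |: L).
      by rewrite !subUset !sub1set !inE !eqxx !yL !orbT.
    move/(rmono hM) => hh1 hh2; rewrite -ltnS; apply: leq_trans hh2 _; apply: leq_trans hh1 _; exact: r3.
  case: (two_others i) => j1 [j2 [j1i j2i j12]].
  have rzx : r [set z; xx] = 2 by rewrite r2 // hxE.
  have hU := rsubW hM (X := [set y j1; z; xx]) (Y := [set y j2; z; xx]) (W := [set z; xx]).
  have : [set z; xx] \subset [set y j1; z; xx] :&: [set y j2; z; xx].
    by rewrite subsetI !subUset !sub1set !inE !eqxx !orbT.
  move/hU => {hU}; rewrite rzx. have := rT _ j1i; have := rT _ j2i => ra rb hU.
  have hV := rsubW hM (X := L) (Y := [set y j1; z; xx] :|: [set y j2; z; xx]) (W := [set y j1; y j2]).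
  have : [set y j1; y j2] \subset L :&: ([set y j1; z; xx] :|: [set y j2; z; xx]).
    by rewrite subsetI !subUset !sub1set !yL !inE !eqxx !orbT.
  move/hV => {hV}.
  rewrite r2 ?hyE ?(inj_eq hyi) // hL2 => hV.
  have : xx |: (z |: L) \subset L :|: ([set y j1; z; xx] :|: [set y j2; z; xx]).
    apply/subsetP => w; rewrite !inE; by case: (w == xx); case: (w == z); case: (w \in L); rewrite ?orbT.
  move/(rmono hM) => hW.
  move: ge3 hW hV hU ra rb; clear; lia.
-
  have sZE : Z \subset E by apply: subset_trans ZA _; apply/subsetP => w; rewrite !inE => /and3P [].
  have s2 : E :\: Z \subset xx |: (S :|: L).
    apply/subsetP => w; rewrite !inE; by case: (w == xx); case: (w \in S); case: (w \in L); case: (w \in E).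
  have c4 : 2 <= #|E :\: Z|.
    apply: leq_trans (subset_leq_card (_ : L \subset _)); first by rewrite cardL; lia.
    apply/subsetP => w wL; rewrite !inE wL (subsetP LE) //.
  have hc := conn2 sZE s2 c2 c4.
  have hcl := coloop ZA. rewrite -/xx in hcl.
  have : xx |: Z \subset xx |: S' by apply: setUS; apply: subsetDl.
  move/(rmono hM) => hm.
  move: hc hcl hm h2 hh3 rSLx; clear; lia.
Qed.

Lemma ineq1 i S : S \subset E :\ x i -> 1 <= #|S| -> 2 <= #|(E :\ x i) :\: S| ->
  r E + 2 <= r (x i |: S) + r (x i |: ((E :\ x i) :\: S)).
Proof.
set xx := x i; set S' := (E :\ xx) :\: S => sS c1 c2.
have sS'E : S' \subset E by apply: subset_trans (subsetDl _ _) (subsetDl _ _).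
have s2 : E :\: S' \subset xx |: S.
  apply/subsetP => w; rewrite !inE; by case: (w == xx); case: (w \in S); case: (w \in E).
case/card_gt0P: c1 => s sIn.
have := subsetP sS _ sIn; rewrite in_setD1 => /andP [sx sE].
have c3 : 2 <= #|E :\: S'|.
  apply: (card2 (a := xx) (b := s)); first by rewrite eq_sym.
    by rewrite !inE eqxx hxE /= andbF.
  by rewrite !inE sIn sE.
have hc := conn2 sS'E s2 c2 c3.
have : S' \subset xx |: S' by apply: subsetU1.
move/(rmono hM) => hm. move: hc hm; clear; lia.
Qed.

Lemma cardSS' i S : S \subset E :\ x i ->
  #|S :&: L| + #|((E :\ x i) :\: S) :&: L| = n.
Proof.
move=> sS; apply: etrans _ cardL; rewrite -(cardsID S L); congr (_ + _).
  by rewrite setIC.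
apply: eq_card => w; rewrite !inE.
case wL: (w \in L); rewrite ?andbF ?andbT //=.
rewrite (subsetP LE _ wL) andbT.
case: (eqVneq w (x i)) => [e|]; last by rewrite andbT.
by move: (xnotL i); rewrite -e wL.
Qed.

Lemma ineq2 i S : S \subset E :\ x i -> 2 <= #|S| -> 2 <= #|(E :\ x i) :\: S| ->
  r E + 3 <= r (x i |: S) + r (x i |: ((E :\ x i) :\: S)).
Proof.
move=> sS c1 c2.
set xx := x i in sS c2 *; set S' := (E :\ xx) :\: S in c2 *.
rewrite leqNgt; apply/negP => hlt.
have sS'E : S' \subset E by apply: subset_trans (subsetDl _ _) (subsetDl _ _).
have sSE : S \subset E by apply: subset_trans sS (subsetDl _ _).
have sS' : S' \subset E :\ xx by apply: subsetDl.
have a1 : r (xx |: S) <= r S.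
  have s2 : E :\: S \subset xx |: S'.
    apply/subsetP => w; rewrite !inE; by case: (w == xx); case: (w \in S); case: (w \in E).
  have c3 : 2 <= #|E :\: S|.
    apply: leq_trans c2 (subset_leq_card _).
    apply/subsetP => w; rewrite !inE; by case: (w == xx); case: (w \in S); case: (w \in E).
  have hc := conn2 sSE s2 c1 c3. move: hc hlt; clear; lia.
have a2 : r (xx |: S') <= r S'.
  have s2 : E :\: S' \subset xx |: S.
    apply/subsetP => w; rewrite !inE; by case: (w == xx); case: (w \in S); case: (w \in E).
  have c3 : 2 <= #|E :\: S'|.
    apply: leq_trans c1 (subset_leq_card _).
    apply/subsetP => w wS; have := subsetP sS _ wS; rewrite in_setD1 => /andP [wx wE].
    by rewrite !inE wS wE.
  have hc := conn2 sS'E s2 c2 c3. move: hc hlt; clear; lia.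
have b1 : r S <= r (xx |: S) := rmono hM (subsetU1 _ _).
have b2 : r S' <= r (xx |: S') := rmono hM (subsetU1 _ _).
have hsum : r S + r S' <= r E + 2 by move: a1 a2 b1 b2 hlt; clear; lia.
have := cardSS' sS; rewrite -/xx -/S' => hcard.
have [d1|d2] : 2 <= #|S :&: L| \/ 2 <= #|S' :&: L| by lia.
  by apply: (key sS a1 a2 hsum d1).
have eS : (E :\ xx) :\: S' = S by apply: compl.
apply: (key (i := i) (S := S') sS'); rewrite ?eS //. lia.
Qed.

Lemma rkc i W : rk (contract M [set x i]) W = r (x i |: (W :&: (E :\ x i))) - 1.
Proof.
rewrite /=. have -> : [set x i] :&: E = [set x i] by apply/setIidPl; rewrite sub1set.
by rewrite r1 // setUC.
Qed.

Lemma conn_contr i : three_connected (contract M [set x i]).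
Proof.
move=> k X /andP [k0 k3] [sX c1 c2 hl].
rewrite /= in sX c2.
move: hl; rewrite /lambda !rkc /=.
set xx := x i in sX c2 *.
have eX : X :&: (E :\ xx) = X := setIidPl sX.
have eD : (E :\ xx :\: X) :&: (E :\ xx) = E :\ xx :\: X := setIidPl (subsetDl _ _).
rewrite !eX eD setIid setD1K ?hxE //.
set S' := (E :\ xx) :\: X in c2 *.
have e1 : 1 <= r (xx |: X).
  rewrite -(r1 (hxE i)); exact: (rmono hM (subsetUl _ _)).
have e2 : 1 <= r (xx |: S').
  rewrite -(r1 (hxE i)); exact: (rmono hM (subsetUl _ _)).
have cE : 3 <= #|E :\ xx|.
  have := cardsD1 xx E; rewrite hxE /= => h. have := rle hM E. lia.
have cS : #|X| + #|S'| = #|E :\ xx|.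
  by rewrite -(cardsID X (E :\ xx)) (setIidPr sX).
have [k1|k2] : k = 1 \/ k = 2 by lia.
- subst k.
  have [d1|d2] : 2 <= #|S'| \/ 2 <= #|X| by lia.
    have := ineq1 sX c1 d1; rewrite -/xx -/S'. lia.
  have sS' : S' \subset E :\ xx by apply: subsetDl.
  have eS : (E :\ xx) :\: S' = X by apply: compl.
  have := ineq1 (i := i) (S := S') sS'; rewrite -/xx eS => /(_ c2 d2). lia.
- subst k. have := ineq2 sX c1 c2; rewrite -/xx -/S'. lia.
Qed.

Lemma spanL i j (B : {set T}) : i != j -> y i \in B -> y j \in B -> r (B :|: L) = r B.
Proof.
move=> ij yi yj.
have h := rsubW hM (X := B) (Y := L) (W := [set y i; y j]).
have : [set y i; y j] \subset B :&: L by rewrite subsetI !subUset !sub1set yi yj !yL.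
move/h; rewrite r2 ?hyE ?(inj_eq hyi) // hL2 => h2.
have := rmono hM (subsetUl B L). lia.
Qed.

Lemma claim i j0 (U : {set T}) : j0 != i -> U \subset A ->
  r (x i |: (y i |: [set (if e == x i then y j0 else e) | e in U])) = r (U :|: L).
Proof.
move=> j0i sU.
set sg := fun e => if e == x i then y j0 else e.
case xU: (x i \in U).
- set B := x i |: (y i |: [set sg e | e in U]).
  have yiB : y i \in B by rewrite !inE eqxx orbT.
  have yjB : y j0 \in B.
    rewrite !inE; apply/orP; right; apply/orP; right; apply/imsetP; exists (x i) => //.
    by rewrite /sg eqxx.
  have s1 : B \subset U :|: L.
    rewrite !subUset !sub1set !inE xU yL orbT /=.
    apply/subsetP => w /imsetP [e eU ->]; rewrite /sg; case: (e == x i).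
      by rewrite inE yL orbT.
    by rewrite inE eU.
  have s2 : U :|: L \subset B :|: L.
    apply/subsetP => w; rewrite inE => /orP [wU|wL]; last by rewrite inE wL orbT.
    rewrite !inE; case: (eqVneq w (x i)) => [->|wx] //.
    apply/orP; left; apply/orP; right; apply/orP; right; apply/imsetP; exists w => //.
    by rewrite /sg (negbTE wx).
  have ij0 : i != j0 by rewrite eq_sym.
  have := rmono hM s1; have := rmono hM s2; rewrite (spanL ij0 yiB yjB).
  lia.
- have -> : [set sg e | e in U] = U.
    rewrite -[RHS]imset_id; apply: eq_in_imset => e eU; rewrite /sg.
    case: (eqVneq e (x i)) => // ex; by move: xU; rewrite -ex eU.
  have sUx : U \subset A :\ x i.
    apply/subsetP => w wU; rewrite in_setD1 (subsetP sU _ wU) andbT.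
    apply/eqP => e; by move: xU; rewrite -e wU.
  have sH : y i |: U \subset H i by rewrite subUset sub1set yH (subset_trans sUx (HA i)).
  have l1 := clm sH (xC i).
  have l2 := clm sH (yC j0i).
  have u1 := radd1 hM (y i |: U) (x i).
  have u2 := radd1 hM (y i |: U) (y j0).
  set B := y j0 |: (y i |: U).
  have s1 : B \subset U :|: L by rewrite !subUset !sub1set !inE !yL !orbT /= subsetUl.
  have s2 : U :|: L \subset B :|: L.
    apply/subsetP => w; rewrite !inE => /orP [->|->]; by rewrite !orbT.
  have := rmono hM s1; have := rmono hM s2.
  have ij0 : i != j0 by rewrite eq_sym.
  rewrite (spanL (B := B) ij0); try by rewrite !inE eqxx ?orbT.
  have eB : r B = r (y i |: U) + 1 by rewrite /B; move: l2 u2; clear; lia.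
  move=> hb ha. move: l1 u1 hb ha eB; clear; lia.

Qed.

Lemma minor_contr i (T' : finType) (N : pmat T') :
  has_minor (si (contract M L)) N -> has_minor (contract M [set x i]) N.
Proof.
case=> C [D [sC sD dCD [f [finj fim frk]]]].
set P := si (contract M L) in sC sD fim frk.
set K := gr P in sC sD.
have KA : K \subset A by rewrite /K /P /si /delete /=; apply: subsetDl.
have rkP : forall Z, Z \subset K -> rk P Z = r (Z :|: L) - r L.
  move=> Z sZ.
  have -> : rk P Z = rk (contract M L) (Z :&: K) by [].
  rewrite (setIidPl sZ) /=.
  have -> : L :&: E = L by apply/setIidPl; exact: LE.
  by rewrite (setIidPl (subset_trans sZ KA)).
set G0 := gr (delete (contract P C) D) in fim.
have G0e : G0 = (K :\: C) :\: D by [].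
have rkN0 : forall Y, Y \subset G0 ->
    rk (delete (contract P C) D) Y = r (Y :|: C :|: L) - r (C :|: L).
  move=> Y sY.
  have -> : rk (delete (contract P C) D) Y = rk (contract P C) (Y :&: G0) by [].
  rewrite (setIidPl sY).
  have -> : rk (contract P C) Y = rk P ((Y :&: (K :\: C)) :|: (C :&: K)) - rk P (C :&: K) by [].
  have sYK : Y \subset K :\: C by apply: subset_trans sY _; rewrite G0e subsetDl.
  rewrite (setIidPl sYK) (setIidPl sC) !rkP //; last first.
    by rewrite subUset sC (subset_trans sYK (subsetDl _ _)).
  have := rmono hM (subsetUr C L).
  have : C :|: L \subset Y :|: C :|: L by rewrite -setUA subsetUr.
  move/(rmono hM). lia.
have G0A : G0 \subset A by rewrite G0e; apply: subset_trans KA; apply: subset_trans (subsetDl _ _) (subsetDl _ _).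
have CA : C \subset A by apply: subset_trans KA.
have G0C : forall g, g \in G0 -> g \notin C by move=> g; rewrite G0e !inE => /andP [_ /andP []].
case: (two_others i) => j0 [j2 [j0i _ _]].
pose sg := fun e => if e == x i then y j0 else e.
have AxL : forall e, e \in A -> e \notin L by move=> e; rewrite inE => /andP [].
have AE : forall e, e \in A -> e \in E by move=> e; rewrite inE => /andP [].
have sgE : forall e, e \in A -> sg e \in E :\ x i.
  move=> e eA; rewrite /sg; case: (eqVneq e (x i)) => [_|ne].
    rewrite in_setD1 hyE andbT; apply/eqP => h; by move: (xnotL i); rewrite -h yL.
  by rewrite in_setD1 ne AE.
have sgy : forall e, e \in A -> sg e != y i.
  move=> e eA; rewrite /sg; case: (eqVneq e (x i)) => [_|ne].
    by rewrite (inj_eq hyi).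
  apply/eqP => h; by move: (AxL _ eA); rewrite h yL.
have sginj : {in A &, injective sg}.
  move=> a b aA bA; rewrite /sg.
  case: (eqVneq a (x i)) => [->|na]; case: (eqVneq b (x i)) => [->|nb] //.
    move=> h; by move: (AxL _ bA); rewrite -h yL.
  move=> h; by move: (AxL _ aA); rewrite h yL.
set C2 := y i |: sg @: C.
set D2 := ((E :\ x i) :\: C2) :\: sg @: G0.
have hsub : sg @: G0 \subset (E :\ x i) :\: C2.
  apply/subsetP => w /imsetP [g gG0 ->].
  rewrite in_setD sgE ?(subsetP G0A) // andbT /C2 in_setU1 negb_or sgy ?(subsetP G0A) //=.
  apply/imsetP => -[c cC e].
  have := sginj _ _ (subsetP G0A _ gG0) (subsetP CA _ cC) e => gc.
  by move: (G0C _ gG0); rewrite gc cC.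
have C2E : C2 \subset E :\ x i.
  rewrite /C2 subUset sub1set in_setD1 hyE andbT.
  apply/andP; split.
    apply/eqP => h; by move: (xnotL i); rewrite -h yL.
  by apply/subsetP => w /imsetP [c cC ->]; apply: sgE; apply: (subsetP CA).
have hgr : sg @: G0 = (E :\ x i :\: C2) :\: D2.
  apply/eqP; rewrite eqEsubset; apply/andP; split.
    apply/subsetP => w wG; have h := subsetP hsub _ wG; rewrite /D2 in_setD h andbT in_setD wG /=.
    done.
  apply/subsetP => w; rewrite /D2 !inE; case: (w \in sg @: G0) => //.
  by case: (w == y i); case: (w \in sg @: C); case: (w == x i); case: (w \in E).
exists C2, D2; split => //=.
- rewrite /D2; apply: subset_trans (subsetDl _ _) (subsetDl _ _).
- rewrite -setI_eq0; apply/eqP/setP => w; rewrite /D2 !inE.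
  by case: (w == y i); case: (w \in sg @: C); rewrite ?andbF.
exists (sg \o f); split.
- move=> a b aN bN /= e; apply: finj => //.
  have fA : forall c, c \in gr N -> f c \in A.
    move=> c cN; apply: (subsetP G0A); rewrite -fim; exact: imset_f.
  exact: sginj (fA _ aN) (fA _ bN) e.
- by rewrite imset_comp fim /= hgr.
move=> X sX.
have fXG : f @: X \subset G0 by rewrite -fim imsetS.
rewrite frk // rkN0 // [(sg \o f) @: X]imset_comp.
have fXA : f @: X \subset A := subset_trans fXG G0A.
have Z3 : sg @: (f @: X) \subset (E :\ x i :\: C2) :\: D2 by rewrite -hgr imsetS.
have Z2 : sg @: (f @: X) \subset (E :\ x i :\: C2) by rewrite (subset_trans Z3) ?subsetDl.
have -> : rk (delete (contract (contract M [set x i]) C2) D2) (sg @: (f @: X)) =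
  rk (contract (contract M [set x i]) C2) (sg @: (f @: X) :&: ((E :\ x i :\: C2) :\: D2)) by [].
rewrite (setIidPl Z3).
have -> : rk (contract (contract M [set x i]) C2) (sg @: (f @: X)) =
  rk (contract M [set x i]) ((sg @: (f @: X) :&: (E :\ x i :\: C2)) :|: (C2 :&: (E :\ x i)))
  - rk (contract M [set x i]) (C2 :&: (E :\ x i)) by [].
rewrite (setIidPl Z2) (setIidPl C2E) !rkc.
have ZC : sg @: (f @: X) :|: C2 \subset E :\ x i by rewrite subUset C2E (subset_trans Z2) ?subsetDl.
rewrite (setIidPl ZC) (setIidPl C2E).
have e1 : x i |: (sg @: (f @: X) :|: C2) = x i |: (y i |: sg @: (f @: X :|: C)).
  by rewrite /C2; congr (_ |: _); rewrite imsetU setUCA.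
have hU : f @: X :|: C \subset A by rewrite subUset fXA CA.
have cl1 := claim j0i hU. have cl2 := claim j0i CA.
rewrite e1 /C2 cl1 cl2.
have := rmono hM (subsetUr C L).
have : C :|: L \subset f @: X :|: C :|: L by rewrite -setUA subsetUr.
move/(rmono hM). rewrite hL2. move=> a b; move: a b; clear; lia.
Qed.
End Car.
Unset Implicit Arguments.
Theorem proposition4p6 (T T' : finType) (M : pmat T) (N : pmat T')
    (n : nat) (x y : 'I_n -> T) :
  is_matroid M -> is_matroid N ->
  three_connected M -> simple M ->
  three_connected N -> simple N ->
  has_minor M N ->
  4 <= rk M (gr M) ->
  carambole M N x y ->
  indep M (hull x) /\ (forall e, e \in hull x -> N_contractible M N e).
Proof.
move=> hM _ h3 hs _ _ _ hr4 [hn [hE hyi] hL2 [_ hmin] hcoc].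
have hxE : forall i, x i \in gr M by move=> i; case: (hE i).
have hyE : forall i, y i \in gr M by move=> i; case: (hE i).
split; first by eapply indep_hull; eauto.
move=> e /imsetP [i _ ->]; split.
  by eapply conn_contr; eauto.
by eapply minor_contr; eauto.
Qed.
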